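(* There exists a Banach algebra which is super weakly amenable but not semiweakly amenable.
   Context: $\mathcal A^*$ is the dual $\mathcal A$-bimodule ($\langle x,a\cdot f\rangle=\langle xa,f\rangle$, $\langle x,f\cdot a\rangle=\langle ax,f\rangle$). A derivation $D:\mathcal A\to X$ is a bounded linear map with $D(ab)=D(a)\cdot b+a\cdot D(b)$; it is inner if $D(a)=a\cdot x-x\cdot a$ for some $x\in X$. $\mathcal A$ is semiweakly amenable if every derivation $D:\mathcal A\to\mathcal A^*$ with $\langle D(a),b\rangle+\langle D(b),a\rangle=0$ for all $a,b$ is inner. For a continuous homomorphism $\varphi:\mathcal A\to\mathcal B$, $\mathcal B_\varphi$ is $\mathcal B$ with $a\cdot b=\varphi(a)b$, $b\cdot a=b\varphi(a)$, and $\mathcal B_\varphi^*$ is its dual bimodule. $\mathcal A$ is super weakly amenable if for every Banach algebra $\mathcal B$, every continuous homomorphism $\varphi:\mathcal A\to\mathcal B$ and every derivation $d:\mathcal A\to\mathcal B_\varphi^*$, $\langle d(a),\varphi(b)\rangle+\langle d(b),\varphi(a)\rangle=0$ for all $a,b\in\mathcal A$. *)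

(* Defs.v *)
From HB Require Import structures.
From mathcomp Require Import all_boot all_order all_algebra.
From mathcomp Require Import all_classical all_reals all_analysis.
From mathcomp Require Import complex.
Import Order.TTheory GRing.Theory Num.Theory.
Import numFieldNormedType.Exports.
Local Open Scope ring_scope.
Local Open Scope complex_scope.

Set Implicit Arguments.
Unset Strict Implicit.
Unset Printing Implicit Defensive.

Section BanachAlgebras.
Variable R : realType.
Notation K := (R[i]).

Definition is_linear_map (U W : normedModType K) (f : U -> W) : Prop :=
  forall (c : K) (x y : U), f (c *: x + y) = c *: f x + f y.

Definition is_lin_functional (U : normedModType K) (f : U -> K) : Prop :=
  forall (c : K) (x y : U), f (c *: x + y) = c * f x + f y.

Definition in_dual (U : normedModType K) (f : U -> K) : Prop :=
  is_lin_functional f /\ exists C : R, forall x : U, `|f x| <= C%:C * `|x|.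

Definition banach_algebra (A : completeNormedModType K) (mul : A -> A -> A) : Prop :=
  [/\ (forall x y z : A, mul x (mul y z) = mul (mul x y) z),
      (forall (c : K) (x y z : A), mul (c *: x + y) z = c *: mul x z + mul y z),
      (forall (c : K) (x y z : A), mul z (c *: x + y) = c *: mul z x + mul z y)
    & (forall x y : A, `|mul x y| <= `|x| * `|y|)].

(* A bounded linear map D : A -> A^*, encoded as D : A -> (A -> K) with
   each D a in A^* and D linear and bounded in the operator norm. *)
Definition bounded_to_dual (A : normedModType K) (U : normedModType K)
    (D : A -> U -> K) : Prop :=
  (forall a : A, in_dual (D a)) /\
  (forall (c : K) (a b : A) (x : U), D (c *: a + b) x = c * D a x + D b x) /\
  (exists C : R, forall (a : A) (x : U), `|D a x| <= C%:C * `|a| * `|x|).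

(* Derivation A -> A^* for the dual bimodule:
   <x, a.f> = <xa, f>,  <x, f.a> = <ax, f>.
   D(ab) = D(a).b + a.D(b)  means  <x, D(ab)> = <bx, D a> + <xa, D b>. *)
Definition derivation_to_dual (A : completeNormedModType K) (mul : A -> A -> A)
    (D : A -> A -> K) : Prop :=
  bounded_to_dual D /\
  forall a b x : A, D (mul a b) x = D a (mul b x) + D b (mul x a).

(* D is inner: D(a) = a.f - f.a for some f in A^*. *)
Definition inner_derivation_to_dual (A : completeNormedModType K)
    (mul : A -> A -> A) (D : A -> A -> K) : Prop :=
  exists f : A -> K, in_dual f /\ forall a x : A, D a x = f (mul x a) - f (mul a x).

Definition semiweakly_amenable (A : completeNormedModType K) (mul : A -> A -> A) : Prop :=
  forall D : A -> A -> K, derivation_to_dual mul D ->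
    (forall a b : A, D a b + D b a = 0) -> inner_derivation_to_dual mul D.

Definition cont_homomorphism (A B : completeNormedModType K)
    (mulA : A -> A -> A) (mulB : B -> B -> B) (phi : A -> B) : Prop :=
  [/\ is_linear_map phi,
      (forall a b : A, phi (mulA a b) = mulB (phi a) (phi b))
    & exists C : R, forall a : A, `|phi a| <= C%:C * `|a|].

(* Derivation d : A -> B_phi^*, where B_phi is B with a.b = phi(a)b,
   b.a = b phi(a); dual module: <y, a.g> = <y phi(a), g>, <y, g.a> = <phi(a) y, g>.
   d(ab) = d(a).b + a.d(b)  means
   <y, d(ab)> = <phi(b) y, d a> + <y phi(a), d b>. *)
Definition derivation_to_Bphi_dual (A B : completeNormedModType K)
    (mulA : A -> A -> A) (mulB : B -> B -> B) (phi : A -> B)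
    (d : A -> B -> K) : Prop :=
  bounded_to_dual d /\
  forall (a b : A) (y : B),
    d (mulA a b) y = d a (mulB (phi b) y) + d b (mulB y (phi a)).

Definition super_weakly_amenable (A : completeNormedModType K) (mul : A -> A -> A) : Prop :=
  forall (B : completeNormedModType K) (mulB : B -> B -> B) (phi : A -> B)
         (d : A -> B -> K),
    banach_algebra mulB -> cont_homomorphism mul mulB phi ->
    derivation_to_Bphi_dual mul mulB phi d ->
    forall a b : A, d a (phi b) + d b (phi a) = 0.

End BanachAlgebras.

(* Main.v *)
Require Import Defs.
From HB Require Import structures.
From mathcomp Require Import all_boot all_order all_algebra.
From mathcomp Require Import all_classical all_reals all_analysis.
From mathcomp Require Import complex.
From mathcomp Require Import ring.

Import Order.TTheory GRing.Theory Num.Theory.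
Import numFieldNormedType.Exports.
Local Open Scope ring_scope.
Local Open Scope complex_scope.
Local Open Scope classical_set_scope.

Section C.
Variable R : realType.

Lemma normc_Re (z : R[i]) : `|complex.Re z| <= complex.Re `|z|.
Proof.
rewrite normc_def /=; case: z => a b /=.
by rewrite -sqrtr_sqr ler_sqrt ?addr_ge0 ?sqr_ge0 // lerDl sqr_ge0.
Qed.

Lemma normc_Im (z : R[i]) : `|complex.Im z| <= complex.Re `|z|.
Proof.
rewrite normc_def /=; case: z => a b /=.
by rewrite -sqrtr_sqr ler_sqrt ?addr_ge0 ?sqr_ge0 // lerDr sqr_ge0.
Qed.

Lemma normc_ReIm (z : R[i]) :
  complex.Re `|z| <= `|complex.Re z| + `|complex.Im z|.
Proof.
rewrite normc_def /=; case: z => a b /=.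
rewrite -[X in _ <= X]ger0_norm ?addr_ge0 //.
rewrite -sqrtr_sqr ler_sqrt ?sqr_ge0 //.
rewrite sqrrD -[a ^+ 2]real_normK ?num_real // -[b ^+ 2]real_normK ?num_real //.
by rewrite -addrA lerD2l lerDr mulrn_wge0 // mulr_ge0.
Qed.

Lemma normc_real (z : R[i]) : `|z| = (complex.Re `|z|)%:C.
Proof. by rewrite normc_def. Qed.

Lemma normc_lt (z : R[i]) (e : R) : `|z| < e%:C ->
  `|complex.Re z| < e /\ `|complex.Im z| < e.
Proof.
rewrite [`|z|]normc_real ltcR => h; split.
  exact: le_lt_trans (normc_Re z) h.
exact: le_lt_trans (normc_Im z) h.
Qed.

Lemma cReB (z w : R[i]) : complex.Re (z - w) = complex.Re z - complex.Re w.
Proof. by case: z; case: w. Qed.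
Lemma cImB (z w : R[i]) : complex.Im (z - w) = complex.Im z - complex.Im w.
Proof. by case: z; case: w. Qed.

Lemma C_complete (F : set_system (R[i])^o) : ProperFilter F -> cauchy F -> cvg F.
Proof.
move=> FF /(cauchyP F) Fc.
have cRe : cauchy ((@complex.Re R) @ F).
  apply/cauchyP => e e0.
  have [x Fx] : exists x, F (ball x e%:C) by apply: Fc; rewrite ltcR.
  exists (complex.Re x).
  suff : F [set y | ball (complex.Re x) e (complex.Re y)] by [].
  apply: filterS Fx => y.
  rewrite -!ball_normE /ball_ /= => /normc_lt[+ _].
  by case: x => a b; case: y => c d.
have cIm : cauchy ((@complex.Im R) @ F).
  apply/cauchyP => e e0.
  have [x Fx] : exists x, F (ball x e%:C) by apply: Fc; rewrite ltcR.
  exists (complex.Im x).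
  suff : F [set y | ball (complex.Im x) e (complex.Im y)] by [].
  apply: filterS Fx => y.
  rewrite -!ball_normE /ball_ /= => /normc_lt[_].
  by case: x => a b; case: y => c d.
have hr : cvg ((@complex.Re R) @ F) by apply: R_complete cRe.
have hs : cvg ((@complex.Im R) @ F) by apply: R_complete cIm.
apply/cvg_ex; exists (lim ((@complex.Re R) @ F) +i* lim ((@complex.Im R) @ F)).
apply/cvgrPdist_lt => e e0.
have [/eqP eI eR] : (complex.Im e == 0) /\ (0 < complex.Re e).
  by move: e0; rewrite ltcE /= => /andP[].
have eE : e = (complex.Re e)%:C.
  by move: eI; clear; case: e => a b /= ->.
have e2 : 0 < complex.Re e / 2 by rewrite divr_gt0.
have := proj1 (cvgrPdist_lt _ _) hr _ e2.
have := proj1 (cvgrPdist_lt _ _) hs _ e2.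
move=> H1 H2; near=> t.
have h1 : `|lim ((@complex.Re R) @ F) - complex.Re t| < complex.Re e / 2.
  by near: t; exact: H2.
have h2 : `|lim ((@complex.Im R) @ F) - complex.Im t| < complex.Re e / 2.
  by near: t; exact: H1.
rewrite [`|_|]normc_real.
rewrite [X in _ < X]eE.
rewrite ltcR; apply: le_lt_trans (normc_ReIm _) _.
rewrite [complex.Re e]splitr cReB cImB /=.
by rewrite ltrD.
Unshelve. all: by end_near.
Qed.

End C.

Definition CC (R : realType) : Type := (R[i])^o.
HB.instance Definition _ (R : realType) := NormedModule.copy (CC R) (R[i])^o.
HB.instance Definition _ (R : realType) :=
  Uniform_isComplete.Build (CC R) (@C_complete R).

Lemma prod_normlt (K : numFieldType) (U V : normedModType K) (x : U * V) (e : K) :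
  (`|x| < e) = (`|x.1| < e) && (`|x.2| < e).
Proof. by rewrite prod_normE num_gt_max. Qed.

Lemma prod_complete (K : numFieldType) (U V : completeNormedModType K)
  (F : set_system ((U : normedModType K) * (V : normedModType K))%type) : ProperFilter F -> cauchy F -> exists l : (U : normedModType K) * (V : normedModType K), F --> l.
Proof.
move=> FF /(cauchyP F) Fc.
have c1 : cauchy (fst @ F).
  apply/cauchyP => e e0.
  have [x Fx] : exists x, F (ball x e) by apply: Fc.
  exists x.1.
  suff : F [set y | ball x.1 e y.1] by [].
  apply: filterS Fx => y.
  by rewrite -!ball_normE /ball_ /= prod_normlt => /andP[].
have c2 : cauchy (snd @ F).
  apply/cauchyP => e e0.
  have [x Fx] : exists x, F (ball x e) by apply: Fc.
  exists x.2.
  suff : F [set y | ball x.2 e y.2] by [].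
  apply: filterS Fx => y.
  by rewrite -!ball_normE /ball_ /= prod_normlt => /andP[].
have h1 : cvg (fst @ F) by apply: cauchy_cvg.
have h2 : cvg (snd @ F) by apply: cauchy_cvg.
exists (lim (fst @ F), lim (snd @ F)).
apply/cvgrPdist_lt => e e0.
have H1 := proj1 (cvgrPdist_lt _ _) h1 _ e0.
have H2 := proj1 (cvgrPdist_lt _ _) h2 _ e0.
near=> t.
rewrite prod_normlt; apply/andP; split.
  by near: t; exact: H1.
by near: t; exact: H2.
Unshelve. all: by end_near.
Qed.


Definition P2 (R : realType) : Type := (CC R * CC R)%type.
HB.instance Definition _ (R : realType) := NormedModule.copy (P2 R) (CC R * CC R)%type.
Lemma P2_complete (R : realType) (F : set_system (P2 R)) :
  ProperFilter F -> cauchy F -> cvg F.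
Proof.
move=> FF Fc; apply/cvg_ex.
exact: (@prod_complete _ (CC R) (CC R) F FF Fc).
Qed.
HB.instance Definition _ (R : realType) :=
  Uniform_isComplete.Build (P2 R) (@P2_complete R).

Definition A3 (R : realType) : Type := (CC R * P2 R)%type.
HB.instance Definition _ (R : realType) := NormedModule.copy (A3 R) (CC R * P2 R)%type.
Lemma A3_complete (R : realType) (F : set_system (A3 R)) :
  ProperFilter F -> cauchy F -> cvg F.
Proof.
move=> FF Fc; apply/cvg_ex.
exact: (@prod_complete _ (CC R) (P2 R) F FF Fc).
Qed.
HB.instance Definition _ (R : realType) :=
  Uniform_isComplete.Build (A3 R) (@A3_complete R).

Section Alg.
Variable R : realType.
Notation K := (R[i]).
Notation A := (A3 R).

Definition mk (a b c : K) : A := (a, (b, c)).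
Definition e1 (u : A) : K := u.1.
Definition e2 (u : A) : K := u.2.1.
Definition e3 (u : A) : K := u.2.2.

Lemma mkE (u : A) : u = mk (e1 u) (e2 u) (e3 u).
Proof. by case: u => a [b c]. Qed.
Lemma e1mk a b c : e1 (mk a b c) = a. Proof. by []. Qed.
Lemma e2mk a b c : e2 (mk a b c) = b. Proof. by []. Qed.
Lemma e3mk a b c : e3 (mk a b c) = c. Proof. by []. Qed.
Lemma e1L (c : K) (u v : A) : e1 (c *: u + v) = c * e1 u + e1 v. Proof. by []. Qed.
Lemma e2L (c : K) (u v : A) : e2 (c *: u + v) = c * e2 u + e2 v. Proof. by []. Qed.
Lemma e3L (c : K) (u v : A) : e3 (c *: u + v) = c * e3 u + e3 v. Proof. by []. Qed.
Lemma e1Z (c : K) (u : A) : e1 (c *: u) = c * e1 u. Proof. by []. Qed.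
Lemma e2Z (c : K) (u : A) : e2 (c *: u) = c * e2 u. Proof. by []. Qed.
Lemma e3Z (c : K) (u : A) : e3 (c *: u) = c * e3 u. Proof. by []. Qed.
Lemma mk_eq a b c a' b' c' : a = a' -> b = b' -> c = c' -> mk a b c = mk a' b' c'.
Proof. by move=> -> -> ->. Qed.
Lemma A_eq (u v : A) : e1 u = e1 v -> e2 u = e2 v -> e3 u = e3 v -> u = v.
Proof. by move: u v => [a [b c]] [a' [b' c']]; rewrite /e1 /e2 /e3 /= => -> -> ->. Qed.
Lemma mk0 : mk 0 0 0 = 0. Proof. by []. Qed.

Lemma normA (u : A) : `|u| = Num.max `|e1 u| (Num.max `|e2 u| `|e3 u|).
Proof. by []. Qed.
Lemma lmax (x y z : K) : y \is Num.real -> z \is Num.real ->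
  (x <= y) || (x <= z) -> x <= Num.max y z.
Proof. by move=> ry rz h; rewrite comparable_le_max ?real_comparable. Qed.
Lemma gmax (x y z : K) : x \is Num.real -> y \is Num.real ->
  x <= z -> y <= z -> Num.max x y <= z.
Proof. by move=> rx ry h1 h2; rewrite comparable_ge_max ?real_comparable ?h1. Qed.
Lemma realmax (x y : K) : x \is Num.real -> y \is Num.real -> Num.max x y \is Num.real.
Proof. by move=> rx ry; apply: max_real. Qed.

Lemma le_e1 (u : A) : `|e1 u| <= `|u|.
Proof. by rewrite normA lmax ?realmax ?normr_real ?lexx. Qed.
Lemma le_e2 (u : A) : `|e2 u| <= `|u|.
Proof. by rewrite normA lmax ?realmax ?normr_real // lmax ?normr_real ?lexx ?orbT. Qed.
Lemma le_e3 (u : A) : `|e3 u| <= `|u|.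
Proof. by rewrite normA lmax ?realmax ?normr_real // lmax ?normr_real ?lexx ?orbT. Qed.

Definition mul (u v : A) : A := mk (e1 u * e1 v) (e1 u * e2 v) (e3 u * e1 v).

Lemma banach_mul : banach_algebra mul.
Proof.
split.
- move=> x y z; apply: A_eq; rewrite /mul ?e1mk ?e2mk ?e3mk; ring.
- move=> c x y z; apply: A_eq; rewrite /mul ?e1L ?e2L ?e3L ?e1mk ?e2mk ?e3mk ?e1L ?e2L ?e3L; ring.
- move=> c x y z; apply: A_eq; rewrite /mul ?e1L ?e2L ?e3L ?e1mk ?e2mk ?e3mk ?e1L ?e2L ?e3L; ring.
- move=> x y; rewrite normA /mul e1mk e2mk e3mk !normrM.
  by rewrite !gmax ?realmax ?normr_real // ler_pM ?normr_ge0 ?le_e1 ?le_e2 ?le_e3.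
Qed.

Lemma real_C (z : K) : z \is Num.real -> exists C : R, C%:C = z.
Proof. by move=> rz; exists (complex.Re z); apply: RRe_real. Qed.

Definition Dm (u v : A) : K := e2 u * e3 v - e3 u * e2 v.

Lemma Dm_bound (a x : A) : `|Dm a x| <= 2 * `|a| * `|x|.
Proof.
rewrite /Dm; apply: le_trans (ler_normB _ _) _; rewrite !normrM.
have h1 : `|e2 a| * `|e3 x| <= `|a| * `|x| by rewrite ler_pM ?normr_ge0 ?le_e2 ?le_e3.
have h2 : `|e3 a| * `|e2 x| <= `|a| * `|x| by rewrite ler_pM ?normr_ge0 ?le_e2 ?le_e3.
have -> : 2 * `|a| * `|x| = `|a| * `|x| + `|a| * `|x| by ring.
exact: lerD.
Qed.

Lemma derD : derivation_to_dual mul Dm.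
Proof.
split; last by move=> a b x; rewrite /Dm /mul !e2mk !e3mk; ring.
split.
  move=> a; split; first by move=> c x y; rewrite /Dm e2L e3L; ring.
  have [C hC] := real_C (2 * `|a|) (ger0_real (mulr_ge0 (ler0n _ 2) (normr_ge0 a))).
  by exists C => x; rewrite hC Dm_bound.
split; first by move=> c a b x; rewrite /Dm e2L e3L; ring.
exists 2 => a x; have -> : (2 : R)%:C = 2 by rewrite rmorph_nat.
exact: Dm_bound.
Qed.

Lemma antiD (a b : A) : Dm a b + Dm b a = 0.
Proof. rewrite /Dm; ring. Qed.

Lemma not_sw : ~ semiweakly_amenable mul.
Proof.
move=> Hsw; have [f [[flin _] hf]] := Hsw Dm derD antiD.
have f0 : f 0 = 0.
  have := flin 1 0 0; rewrite scale1r addr0 mul1r => h.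
  by apply: (addrI (f 0)); rewrite addr0 -h.
have := hf (mk 0 1 0) (mk 0 0 1).
rewrite /Dm /mul !e1mk !e2mk !e3mk !mul0r !mulr0 !mul1r mk0 f0 subrr subr0.
by move/eqP; rewrite oner_eq0.
Qed.

Definition bE : A := mk 1 0 0.
Definition bX : A := mk 0 1 0.
Definition bY : A := mk 0 0 1.

Lemma mulmk a b c a' b' c' : mul (mk a b c) (mk a' b' c') = mk (a * a') (a * b') (c * a').
Proof. by []. Qed.

Lemma decomp (u : A) : u = e1 u *: bE + (e2 u *: bX + e3 u *: bY).
Proof.
apply: A_eq; rewrite ?e1L ?e2L ?e3L ?e1Z ?e2Z ?e3Z /bE /bX /bY ?e1mk ?e2mk ?e3mk; ring.
Qed.

Lemma bilin_zero (f : A -> K) : (forall (c : K) x y, f (c *: x + y) = c * f x + f y) -> f 0 = 0.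
Proof.
move=> flin; have := flin 1 0 0; rewrite scale1r addr0 mul1r => h.
by apply: (addrI (f 0)); rewrite addr0 -h.
Qed.

Lemma sw : super_weakly_amenable mul.
Proof.
move=> B mulB phi d _ [phil phim _] [[dd [dlin _]] dder].
pose T x y := d x (phi y).
have hT x y z : T (mul x y) z = T x (mul y z) + T y (mul z x).
  by rewrite /T dder -!phim.
have lin1 c x y z : T (c *: x + y) z = c * T x z + T y z by rewrite /T dlin.
have lin2 c x y z : T x (c *: y + z) = c * T x y + T x z.
  by rewrite /T phil; case: (dd x) => hl _; apply: hl.
have T0l z : T 0 z = 0 by apply: (bilin_zero (fun x => T x z)) => c x y; apply: lin1.
have T0r x : T x 0 = 0 by apply: (bilin_zero (fun y => T x y)) => c y z; apply: lin2.
have lin1s c x z : T (c *: x) z = c * T x z.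
  by have := lin1 c x 0 z; rewrite addr0 T0l addr0.
have lin2s c x y : T x (c *: y) = c * T x y.
  by have := lin2 c x y 0; rewrite addr0 T0r addr0.
have mEE : mul bE bE = bE by rewrite /bE mulmk !mul1r mul0r.
have mEX : mul bE bX = bX by rewrite /bE /bX mulmk !mul1r !mul0r.
have mXX : mul bX bX = 0 by rewrite /bX mulmk !mul0r.
have mXE : mul bX bE = 0 by rewrite /bE /bX mulmk !mul0r ?mulr0.
have mYE : mul bY bE = bY by rewrite /bE /bY mulmk !mul0r !mul1r ?mulr0.
have mEY : mul bE bY = 0 by rewrite /bE /bY mulmk !mul0r !mul1r ?mulr0.
have mYY : mul bY bY = 0 by rewrite /bY mulmk !mul0r ?mulr0.
have mXY : mul bX bY = 0 by rewrite /bX /bY mulmk !mul0r ?mulr0.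
have hEE : T bE bE = 0.
  have := hT bE bE bE; rewrite mEE => h.
  by apply: (addrI (T bE bE)); rewrite addr0 -h.
have hXX : T bX bX = 0.
  by have := hT bE bX bX; rewrite mEX mXX mXE T0r T0r addr0.
have hYY : T bY bY = 0.
  by have := hT bY bE bY; rewrite mYE mEY mYY T0r T0r addr0.
have hXE : T bX bE = - T bE bX.
  have := hT bX bE bE; rewrite mXE mEE mEX T0l => /eqP.
  by rewrite eq_sym addr_eq0 => /eqP.
have hXY : T bX bY = - T bY bX.
  have := hT bX bY bE; rewrite mXY mYE mEX T0l => /eqP.
  by rewrite eq_sym addr_eq0 => /eqP.
have hYE : T bY bE = - T bE bY.
  have := hT bE bY bE; rewrite mEY mYE mEE T0l => /eqP.
  by rewrite eq_sym addr_eq0 => /eqP ->; rewrite opprK.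
move=> a b; rewrite -/(T a b) -/(T b a).
rewrite (decomp a) (decomp b) !lin1 !lin1s !lin2 !lin2s.
rewrite hEE hXX hYY hXE hXY hYE; ring.
Qed.
End Alg.

Theorem corollary3p7 (R : realType) :
  exists (A : completeNormedModType R[i]) (mul : A -> A -> A),
    [/\ banach_algebra mul, super_weakly_amenable mul & ~ semiweakly_amenable mul].
Proof.
by exists (A3 R), (@mul R); split; [exact: banach_mul | exact: sw | exact: not_sw].
Qed.
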